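(* Let $K$ be a (not necessarily commutative) field and $K[X]$ the polynomial ring over $K$ in a central indeterminate $X$. Then the projective line $\mathbb{P}(K[X])$ is connected and has infinite diameter.
   Context: For a ring $R$ with $1$, a pair $(a,b)\in R^2$ is admissible if it is the first row of an invertible $2\times2$ matrix over $R$; $\mathbb{P}(R)$ is the set of cyclic submodules $R(a,b)$ of the left module $R^2$ with $(a,b)$ admissible. Two points $R(a,b)$, $R(c,d)$ are distant iff $\begin{pmatrix}a&b\\c&d\end{pmatrix}$ is invertible. Connectedness, distance (least number of edges of a joining path) and diameter (supremum of distances) refer to the graph on $\mathbb{P}(R)$ whose edges are pairs of distant points. *)

(* Defs.v *)
From HB Require Import structures.
From mathcomp Require Import all_boot all_order all_algebra.
Set Implicit Arguments. Unset Strict Implicit. Unset Printing Implicit Defensive.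
Import GRing.Theory.
Local Open Scope ring_scope.

Section ProjLine.
Variable R : nzRingType.

Definition mx2 (a b c d : R) : 'M[R]_2 :=
  \matrix_(i < 2, j < 2)
    if i == 0 :> nat then (if j == 0 :> nat then a else b)
    else (if j == 0 :> nat then c else d).

Definition mx_invertible (M : 'M[R]_2) : Prop :=
  exists N : 'M[R]_2, M *m N = 1%:M /\ N *m M = 1%:M.

Definition admissible (a b : R) : Prop :=
  exists c d : R, mx_invertible (mx2 a b c d).

(* the cyclic submodule R(a,b) of the left module R^2 *)
Definition cyc (a b : R) : R * R -> Prop :=
  fun p => exists r : R, p = (r * a, r * b).

Definition is_point (S : R * R -> Prop) : Prop :=
  exists a b : R, admissible a b /\ S = cyc a b.

Definition distant (S T : R * R -> Prop) : Prop :=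
  exists a b c d : R, admissible a b /\ admissible c d /\
    S = cyc a b /\ T = cyc c d /\ mx_invertible (mx2 a b c d).

Definition path_len (n : nat) (S T : R * R -> Prop) : Prop :=
  exists s : nat -> (R * R -> Prop),
    s 0%N = S /\ s n = T /\ (forall i, (i < n)%N -> distant (s i) (s i.+1)).

Definition proj_line_connected : Prop :=
  forall S T, is_point S -> is_point T -> exists n, path_len n S T.

Definition proj_line_infinite_diameter : Prop :=
  forall n : nat, exists S T, is_point S /\ is_point T /\
    forall m, (m <= n)%N -> ~ path_len m S T.

End ProjLine.

(* Main.v *)
Require Import Defs.
From HB Require Import structures.
From mathcomp Require Import all_boot all_order all_algebra.
From Stdlib Require Import FunctionalExtensionality PropExtensionality.
From mathcomp Require Import zify.
Set Implicit Arguments. Unset Strict Implicit. Unset Printing Implicit Defensive.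
Import GRing.Theory.
Local Open Scope ring_scope.
Section M.
Variable R : nzRingType.
Definition i0 : 'I_2 := @Ordinal 2 0 isT.
Definition i1 : 'I_2 := @Ordinal 2 1 isT.

Lemma ord2P (i : 'I_2) : i = i0 \/ i = i1.
Proof. by case: i => [[|[|i]]] hi; [left|right|by []]; apply: val_inj. Qed.

Lemma mx2E (a b c d : R) :
  [/\ mx2 a b c d i0 i0 = a, mx2 a b c d i0 i1 = b, mx2 a b c d i1 i0 = c & mx2 a b c d i1 i1 = d].
Proof. by rewrite !mxE. Qed.

Lemma mx2_eta (M : 'M[R]_2) : M = mx2 (M i0 i0) (M i0 i1) (M i1 i0) (M i1 i1).
Proof.
apply/matrixP => i j; rewrite mxE.
by case: (ord2P i) => ->; case: (ord2P j) => ->.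
Qed.

Lemma mulE (A B : 'M[R]_2) i j : (A *m B) i j = A i i0 * B i0 j + A i i1 * B i1 j.
Proof.
rewrite mxE !big_ord_recl big_ord0 addr0.
by congr (_ * _ + _ * _); congr (_ _ _); apply: val_inj.
Qed.

Lemma mx2_mul (a b c d e f g h : R) :
  mx2 a b c d *m mx2 e f g h = mx2 (a*e+b*g) (a*f+b*h) (c*e+d*g) (c*f+d*h).
Proof.
by rewrite [LHS]mx2_eta !mulE; case: (mx2E a b c d) => -> -> -> ->; case: (mx2E e f g h) => -> -> -> ->.
Qed.

Lemma mx2_one : (1%:M : 'M[R]_2) = mx2 (1:R) 0 0 1.
Proof. by apply/matrixP => i j; rewrite !mxE; case: (ord2P i) => ->; case: (ord2P j) => ->. Qed.

Lemma mx2_inj (a b c d a' b' c' d' : R) : mx2 a b c d = mx2 a' b' c' d' ->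
  [/\ a = a', b = b', c = c' & d = d'].
Proof.
move=> e; split;
 [move: (congr1 (fun M : 'M[R]_2 => M i0 i0) e) | move: (congr1 (fun M : 'M[R]_2 => M i0 i1) e) |
  move: (congr1 (fun M : 'M[R]_2 => M i1 i0) e) | move: (congr1 (fun M : 'M[R]_2 => M i1 i1) e)];
 by rewrite !mxE.
Qed.

Lemma inv_mul (A B : 'M[R]_2) : mx_invertible A -> mx_invertible B -> mx_invertible (A *m B).
Proof.
move=> [NA [h1 h2]] [NB [h3 h4]]; exists (NB *m NA); split.
  by rewrite mulmxA -(mulmxA A) h3 mulmx1 h1.
by rewrite mulmxA -(mulmxA NB) h2 mulmx1 h4.
Qed.

Lemma inv_mx2 (a b c d : R) : mx_invertible (mx2 a b c d) <->
  exists e f g h, [/\ a*e+b*g = 1, a*f+b*h = 0, c*e+d*g = 0 & c*f+d*h = 1] /\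
                  [/\ e*a+f*c = 1, e*b+f*d = 0, g*a+h*c = 0 & g*b+h*d = 1].
Proof.
split.
  move=> [N [h1 h2]]; exists (N i0 i0), (N i0 i1), (N i1 i0), (N i1 i1).
  move: h1 h2; rewrite mx2_one [N]mx2_eta !mx2_mul.
  move=> /mx2_inj [? ? ? ?] /mx2_inj [? ? ? ?]; rewrite !mxE /=; by split; split.
move=> [e [f [g [h [[h1 h2 h3 h4] [h5 h6 h7 h8]]]]]].
by exists (mx2 e f g h); rewrite !mx2_mul mx2_one h1 h2 h3 h4 h5 h6 h7 h8.
Qed.

End M.
Section Main.
Variable K : unitRingType.
Hypothesis hK : forall x : K, x != 0 -> x \is a GRing.unit.
Local Notation R := {poly K}.

Lemma Kmul_neq0 (x y : K) : x != 0 -> y != 0 -> x * y != 0.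
Proof.
move=> hx hy; apply/eqP => h; move/eqP: hy; apply.
by rewrite -(mulKr (hK hx) y) h mulr0.
Qed.

Lemma szM (p q : R) : p != 0 -> q != 0 -> size (p * q) = (size p + size q).-1.
Proof.
move=> hp hq; apply: size_proper_mul; apply: Kmul_neq0; by rewrite lead_coef_eq0.
Qed.

Lemma mulP_neq0 (p q : R) : p != 0 -> q != 0 -> p * q != 0.
Proof.
move=> hp hq; rewrite -size_poly_gt0 szM //.
move: hp hq; rewrite -!size_poly_gt0; case: (size p) => // n; case: (size q) => //= m _ _.
by rewrite ?addSn ?addnS.
Qed.

Lemma mulP_eq0 (p q : R) : p * q = 0 -> p = 0 \/ q = 0.
Proof.
move=> h; case: (eqVneq p 0) => hp; first by left.
case: (eqVneq q 0) => hq; first by right.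
by move: (mulP_neq0 hp hq); rewrite h eqxx.
Qed.

Lemma szM_ge (p q : R) : q != 0 -> (size p <= size (p * q)%R)%N.
Proof.
move=> hq; case: (eqVneq p 0) => [->|hp]; first by rewrite size_poly0.
rewrite szM //; move: hq; rewrite -size_poly_gt0; case: (size q) => // n _.
by rewrite addnS /= leq_addr.
Qed.

Lemma szM_gel (p q : R) : p != 0 -> (size q <= size (p * q)%R)%N.
Proof.
move=> hp; case: (eqVneq q 0) => [->|hq]; first by rewrite size_poly0.
rewrite szM //; move: hp; rewrite -size_poly_gt0; case: (size p) => // n _.
by rewrite addSn /= leq_addl.
Qed.

Definition cst (c : R) := size c = 1%N.

Lemma cst_inv (c : R) : cst c -> exists w, c * w = 1 /\ w * c = 1 /\ cst w.
Proof.
rewrite /cst => hc.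
have e : c = (c`_0)%:P by apply: size1_polyC; rewrite hc.
have c0 : c`_0 != 0 by rewrite -polyC_eq0 -e -size_poly_gt0 hc.
move: e c0; set a := c`_0 => e c0.
exists (a^-1)%:P; rewrite e -!polyCM mulrV ?mulVr ?hK //; split => //; split => //.
by rewrite /cst size_polyC invr_eq0 c0.
Qed.

Lemma cst_neq0 (c : R) : cst c -> c != 0.
Proof. by rewrite /cst -size_poly_gt0 => ->. Qed.

Lemma szMc (p c : R) : cst c -> size (p * c) = size p.
Proof.
move=> hc; case: (eqVneq p 0) => [->|hp]; first by rewrite mul0r.
have hc' : size c = 1%N := hc.
by rewrite (szM hp (cst_neq0 hc)) hc' addn1.
Qed.

Lemma szcM (p c : R) : cst c -> size (c * p) = size p.
Proof.
move=> hc; case: (eqVneq p 0) => [->|hp]; first by rewrite mulr0.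
have hc' : size c = 1%N := hc.
by rewrite (szM (cst_neq0 hc) hp) hc'.
Qed.

Lemma one_sided_cst (x y : R) : x * y = 1 -> cst x /\ cst y.
Proof.
move=> h.
have hx : x != 0 by apply/eqP => e; move: h; rewrite e mul0r => /eqP; rewrite eq_sym oner_eq0.
have hy : y != 0 by apply/eqP => e; move: h; rewrite e mulr0 => /eqP; rewrite eq_sym oner_eq0.
have := szM hx hy; rewrite h size_poly1 /cst.
move: hx hy; rewrite -!size_poly_gt0.
by move=> *; lia.
Qed.

Lemma cstM (x y : R) : cst x -> cst y -> cst (x * y).
Proof. by move=> hx hy; rewrite /cst szMc. Qed.

Lemma cstN (x : R) : cst x -> cst (- x).
Proof. by rewrite /cst size_polyN. Qed.


Lemma divP (a b : R) : b != 0 -> exists t r, a = b * t + r /\ (size r < size b)%N.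
Proof.
move=> hb; have [n] := ubnP (size a); elim: n a => // n IH a ha.
case: (ltnP (size a) (size b)) => hab.
  by exists 0, a; rewrite mulr0 add0r.
have sb : (0 < size b)%N by rewrite size_poly_gt0.
set k := (size a - size b)%N.
set c := (lead_coef b)^-1 * lead_coef a.
set m := b * (c%:P * 'X^k).
have hm : (size (a - m)%R < size a)%N.
  have sa : (0 < size a)%N by apply: leq_trans hab.
  suff : (size (a - m)%R <= (size a).-1)%N by rewrite -[(size a)](prednK sa) ltnS.
  apply/leq_sizeP => j hj.
  rewrite coefB /m mulrA coefMXn coefMC.
  have -> : (j < k)%N = false by apply/negbTE; rewrite -leqNgt; apply: leq_trans hj; rewrite /k; lia.
  case: (ltngtP j (size a).-1) => hj2.
  - by move: hj; rewrite leqNgt hj2.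
  - have h1 : (size a <= j)%N by move: hj2 sa; case: (size a) => //= x; lia.
    have h2 : (size b <= j - k)%N by move: hj2 sa hab h1; rewrite /k; case: (size a) => //= x; lia.
    by rewrite (nth_default _ h1) (nth_default _ h2) mul0r subr0.
  - have -> : (j - k = (size b).-1)%N by rewrite /k; lia.
    rewrite -!lead_coefE hj2 -lead_coefE /c mulrA mulrV ?mul1r ?subrr //.
    by apply: hK; rewrite lead_coef_eq0.
have [t [r [e hr]]] := IH (a - m) (leq_trans hm (ltnSE ha)).
exists (c%:P * 'X^k + t), r; split => //.
by rewrite mulrDr -addrA -e /m addrC subrK.
Qed.


Lemma cyc_mem (a b : R) : cyc a b (a, b).
Proof. by exists 1; rewrite !mul1r. Qed.

Lemma cyc_eq (a b a' b' : R) : cyc a b = cyc a' b' -> exists r, a' = r * a /\ b' = r * b.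
Proof. by move=> e; have := cyc_mem a' b'; rewrite -e => -[r [-> ->]]; exists r. Qed.

Lemma cyc_scale (k w a b : R) : w * k = 1 -> cyc (k * a) (k * b) = cyc a b.
Proof.
move=> hw; apply: functional_extensionality => p; apply: propositional_extensionality.
split => -[r ->].
  by exists (r * k); rewrite !mulrA.
by exists (r * w); rewrite !mulrA -(mulrA r w k) hw mulr1.
Qed.

Lemma adm_nz (a b : R) : admissible a b -> a = 0 -> b = 0 -> False.
Proof.
move=> [c [d /inv_mx2 [e [f [g [h [[h1 _ _ _] _]]]]]]] ea eb.
by move: h1; rewrite ea eb !mul0r addr0 => /eqP; rewrite eq_sym oner_eq0.
Qed.

Definition pt (M : 'M[R]_2) := cyc (M i0 i0) (M i0 i1).
Definition Emx (t : R) : 'M[R]_2 := mx2 t 1 (-1) 0.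

Lemma Emul (t a b c d : R) : Emx t *m mx2 a b c d = mx2 (t*a + c) (t*b + d) (-a) (-b).
Proof. by rewrite /Emx mx2_mul !mul1r !mulN1r !mul0r !addr0. Qed.

Lemma pt_mx2 (a b c d : R) : pt (mx2 a b c d) = cyc a b.
Proof. by rewrite /pt !mxE. Qed.

Lemma Emx_inv t : mx_invertible (Emx t).
Proof.
apply/inv_mx2; exists 0, (-1), 1, t; split; split;
  by rewrite ?mul0r ?mulr0 ?mul1r ?mulr1 ?mulrN1 ?mulN1r ?add0r ?addr0 ?opprK ?addNr ?addrN.
Qed.

Lemma pt_point (M : 'M[R]_2) : mx_invertible M -> is_point (pt M).
Proof.
move=> hM; exists (M i0 i0), (M i0 i1); split => //.
by exists (M i1 i0), (M i1 i1); rewrite -mx2_eta.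
Qed.

Lemma distant_sym (S T : R * R -> Prop) : distant S T -> distant T S.
Proof.
move=> [a [b [c [d [ha [hc [e1 [e2 /inv_mx2 [e [f [g [h [[h1 h2 h3 h4] [h5 h6 h7 h8]]]]]]]]]]]]]].
exists c, d, a, b; do 4 split => //.
apply/inv_mx2; exists f, e, h, g; split; split => //; by rewrite addrC.
Qed.

Lemma edge (a b c d t : R) : mx_invertible (mx2 a b c d) ->
  distant (cyc a b) (cyc (t*a + c) (t*b + d)).
Proof.
move=> hM; exists a, b, (t*a + c), (t*b + d); split; first by exists c, d.
split; first by exists (-a), (-b); rewrite -Emul; apply: inv_mul => //; apply: Emx_inv.
do 2 split => //.
have -> : mx2 a b (t * a + c) (t * b + d) = mx2 1 0 t 1 *m mx2 a b c d.
  by rewrite mx2_mul !mul1r !mul0r ?addr0 ?add0r.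
apply: inv_mul => //; apply/inv_mx2; exists 1, 0, (-t), 1; split; split;
  by rewrite ?mul0r ?mulr0 ?mul1r ?mulr1 ?add0r ?addr0 ?mulrN ?mulNr ?addNr ?addrN.
Qed.

Lemma step (a b c d : R) Q : mx_invertible (mx2 a b c d) -> distant (cyc a b) Q ->
  exists t, Q = cyc (t*a + c) (t*b + d).
Proof.
move=> /inv_mx2 [e [f [g [h [[h1 h2 h3 h4] [h5 h6 h7 h8]]]]]].
move=> [a' [b' [c' [d' [ha' [hc' [e1 [-> /inv_mx2 [p11 [p12 [p21 [p22 [[k1 k2 k3 k4] _]]]]]]]]]]]]].
have [r [ea eb]] := cyc_eq e1.
set t0 := c' * e + d' * g; set v := c' * f + d' * h.
have ec : c' = t0 * a + v * c.
  rewrite /t0 /v !mulrDl -!mulrA addrACA -!mulrDr h5 h7 mulr1 mulr0 addr0 //.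
have ed : d' = t0 * b + v * d.
  rewrite /t0 /v !mulrDl -!mulrA addrACA -!mulrDr h6 h8 mulr1 mulr0 add0r //.
clearbody t0 v.
have q12 : a * p12 + b * p22 = 0.
  have : r * (a * p12 + b * p22) = 0 by rewrite mulrDr !mulrA -ea -eb.
  case/mulP_eq0 => // r0; exfalso; apply: (adm_nz ha'); by rewrite ?ea ?eb r0 mul0r.
have hv : v * (c * p12 + d * p22) = 1.
  rewrite -k4 ec ed !mulrDl -!mulrA addrACA -!mulrDr q12 mulr0 add0r //.
have [cv _] := one_sided_cst hv.
have [w [vw [wv _]]] := cst_inv cv.
exists (w * t0).
by rewrite ec ed -[in RHS](cyc_scale _ _ wv) !mulrDr !mulrA vw !mul1r.
Qed.


Definition chainL (l : seq R) : 'M[R]_2 := foldr (fun t M => Emx t *m M) 1%:M l.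

Lemma chainL_rcons l t : chainL (rcons l t) = chainL l *m Emx t.
Proof. elim: l => [|s l IH] /=; first by rewrite mul1mx mulmx1. by rewrite IH mulmxA. Qed.

Lemma one_inv : mx_invertible (1%:M : 'M[R]_2).
Proof. by exists 1%:M; rewrite mulmx1. Qed.

Lemma chainL_inv l : mx_invertible (chainL l).
Proof. elim: l => [|t l IH] /=; [exact: one_inv | exact: inv_mul (Emx_inv t) IH]. Qed.

Lemma pt_E (t : R) M : pt (Emx t *m M) = cyc (t * M i0 i0 + M i1 i0) (t * M i0 i1 + M i1 i1).
Proof. by rewrite [M in LHS]mx2_eta Emul pt_mx2. Qed.

Lemma euclid n : forall a b e f : R, (size b < n)%N -> a * e + b * f = 1 ->
  exists l g, cst g /\ a = g * chainL l i0 i0 /\ b = g * chainL l i0 i1.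
Proof.
elim: n => // n IH a b e f hb h.
case: (eqVneq b 0) => [b0|bn0].
  move: h; rewrite b0 mul0r addr0 => h.
  have [ca _] := one_sided_cst h.
  by exists [::], a; rewrite /= !mxE /= mulr1 mulr0.
have [t [r [ea hr]]] := divP a bn0.
have h' : b * (t * e + f) + (- r) * (- e) = 1.
  by rewrite mulrNN mulrDr mulrA addrAC -mulrDl -ea.
have hs : (size (- r) < n)%N by rewrite size_polyN; exact: leq_trans hr hb.
have [l [g [cg [e1 e2]]]] := IH b (- r) _ _ hs h'.
exists (rcons l t), g; split => //; rewrite chainL_rcons !mulE /Emx !mxE /=.
rewrite mulr1 mulr0 addr0 -e1; split => //.
by rewrite mulrN1 mulrDr mulrA -e1 mulrN -e2 opprK.
Qed.

Lemma path0 (S : R * R -> Prop) : path_len 0 S S.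
Proof. by exists (fun _ => S). Qed.

Lemma path_ext n (S T U : R * R -> Prop) : path_len n S T -> distant T U -> path_len n.+1 S U.
Proof.
move=> [s [s0 [sn hs]]] hTU.
exists (fun i => if i == n.+1 then U else s i); rewrite /= eqxx; split => //; split => //.
move=> i hi; rewrite eqSS.
case: (eqVneq i n) => [->|hin]; first by rewrite (ltn_eqF (ltnSn n)) sn.
rewrite (ltn_eqF hi); apply: hs; lia.
Qed.

Lemma path_rev n (S T : R * R -> Prop) : path_len n S T -> path_len n T S.
Proof.
move=> [s [s0 [sn hs]]].
exists (fun i => s (n - i)%N); rewrite subn0 subnn; split => //; split => //.
move=> i hi; apply: distant_sym.
have e : (n - i = (n - i.+1).+1)%N by lia.
rewrite e; apply: hs; lia.
Qed.

Lemma path_cat n m (S T U : R * R -> Prop) : path_len n S T -> path_len m T U -> path_len (n + m) S U.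
Proof.
elim: m U => [|m IH] U; first by rewrite addn0 => h [s [s0 [sm _]]]; rewrite -sm s0.
move=> h1 [s [s0 [sm hs]]].
have h2 : path_len m T (s m) by exists s; split => //; split => // i hi; apply: hs; lia.
rewrite addnS; apply: path_ext (IH _ h1 h2) _.
by rewrite -sm; apply: hs.
Qed.

Lemma path_chain l : path_len (size l) (pt 1%:M) (pt (chainL l)).
Proof.
elim: l => [|t l IH] /=; first exact: path0.
apply: path_ext IH _; rewrite pt_E /pt.
apply: edge; rewrite -mx2_eta; exact: chainL_inv.
Qed.

Lemma point_chain S : is_point S -> exists l, S = pt (chainL l).
Proof.
move=> [a [b [[c [d /inv_mx2 [e [f [g [h [[h1 _ _ _] _]]]]]]] ->]]].
have [l [k [ck [ea eb]]]] := euclid (ltnSn (size b)) h1.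
exists l; have [w [_ [wk _]]] := cst_inv ck.
by rewrite ea eb (cyc_scale _ _ wk).
Qed.

Lemma connected : proj_line_connected R.
Proof.
move=> S T hS hT.
have [l1 e1] := point_chain hS; have [l2 e2] := point_chain hT.
exists (size l1 + size l2)%N; apply: (@path_cat _ _ _ (pt 1%:M)).
  by rewrite e1; apply: path_rev; apply: path_chain.
by rewrite e2; apply: path_chain.
Qed.


Lemma gen (A B C D : R) : A - B + C + D - A - C = D - B.
Proof.
by rewrite (addrAC _ C D) (addrAC _ (- A) (- C)) addrK (addrAC _ D) (addrAC A) subrr add0r addrC.
Qed.

Definition Pc l := chainL l i0 i0.
Definition Qc l := chainL l i0 i1.

Lemma prc l s : Pc (rcons l s) = Pc l * s - Qc l /\ Qc (rcons l s) = Pc l.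
Proof.
rewrite /Pc /Qc chainL_rcons !mulE /Emx !mxE /=.
by rewrite mulrN1 mulr1 mulr0 addr0.
Qed.

Definition big (l : seq R) := all (fun s : R => (1 < size s)%N) l.

Lemma growth l : big l -> (size (Qc l) < size (Pc l))%N.
Proof.
elim/last_ind: l => [|l s IH]; first by rewrite /Pc /Qc /= !mxE /= size_poly0 size_poly1.
rewrite /big all_rcons => /andP [hs hl]; have {}IH := IH hl.
have [-> ->] := prc l s.
have pn : Pc l != 0 by rewrite -size_poly_gt0; apply: leq_ltn_trans IH.
have sn : s != 0 by rewrite -size_poly_gt0; apply: ltn_trans hs.
have e : size (Pc l * s) = (size (Pc l) + size s).-1 by apply: szM.
have h : (size (Pc l) < size (Pc l * s)%R)%N.
  by rewrite e; move: hs; case: (size s) => // [[|k]] // _; move=> *; lia.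
by rewrite size_polyDl // size_polyN; apply: ltn_trans IH h.
Qed.

Lemma U (l : seq R) : forall l0 mu a c d, big l -> big l0 -> cst mu -> cst a -> cst d ->
  mu * Pc l0 = Pc l * a + Qc l * c -> mu * Qc l0 = Qc l * d -> size l = size l0.
Proof.
elim/last_ind: l => [|l s IH] l0 mu a c d hl hl0 cmu ca cd e1 e2.
  case/lastP: l0 hl0 e1 e2 => [//|l0 s0] hl0 e1 e2.
  move: e2; have [_ ->] := prc l0 s0; rewrite /Qc /= !mxE /= mul0r => h.
  have : mu * Pc l0 != 0; last by rewrite h eqxx.
  apply: mulP_neq0; first exact: cst_neq0.
  move: hl0; rewrite /big all_rcons => /andP [_ h0].
  by rewrite -size_poly_gt0; apply: leq_ltn_trans (growth h0).
move: hl; rewrite /big all_rcons => /andP [hs hl].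
have pln : Pc l != 0 by rewrite -size_poly_gt0; apply: leq_ltn_trans (growth hl).
case/lastP: l0 hl0 e1 e2 => [|l0 s0] hl0 e1 e2.
  move: e2; have [_ ->] := prc l s; rewrite /Qc /= !mxE /= mulr0 => h.
  have : Pc l * d != 0 by apply: mulP_neq0 => //; apply: cst_neq0.
  by rewrite -h eqxx.
move: hl0; rewrite /big all_rcons => /andP [hs0 hl0].
move: e1 e2; have [-> ->] := prc l s; have [-> ->] := prc l0 s0 => E2 E1.
rewrite !size_rcons; congr S.
set p' := Pc l in E1 E2 pln *; set q' := Qc l in E2 *.
set p0 := Pc l0 in E1 E2 *; set q0 := Qc l0 in E2 *.
have key : mu * q0 - q' * a = p' * (d * s0 - s * a - c).
  rewrite !mulrBr !mulrA -E1.
  move: E2; rewrite mulrBr mulrBl !mulrA => E2.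
  have E3 : mu * p0 * s0 = p' * s * a - q' * a + p' * c + mu * q0 by rewrite -E2 subrK.
  by rewrite E3 gen.
have hq0 : (size q0 < size p0)%N by apply: growth.
have hq' : (size q' < size p')%N by apply: growth.
have sp0 : size p0 = size p' by rewrite -(szcM _ cmu) E1 szMc.
have z0 : d * s0 - s * a - c = 0.
  apply/eqP; apply/negP => /negP zn.
  have := szM_ge p' zn; rewrite -key.
  have h1 : (size (mu * q0)%R < size p')%N by rewrite szcM // -sp0.
  have h2 : (size (q' * a)%R < size p')%N by rewrite szMc.
  have := size_polyD (mu * q0) (- (q' * a)); rewrite size_polyN.
  move: h1 h2; move: (size (mu * q0)) (size (q' * a)) (size (mu * q0 - q' * a)) => x y w.
  lia.
move: key; rewrite z0 mulr0 => /eqP; rewrite subr_eq0 => /eqP key.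
apply: (IH l0 mu d 0 a) => //; by rewrite mulr0 addr0.
Qed.


Definition cstmx (B : 'M[R]_2) := forall i j, (size (B i j) <= 1)%N.

Definition NF (T : R * R -> Prop) m := exists l B, big l /\ (size l <= m)%N /\ cstmx B /\
  mx_invertible B /\ T = pt (chainL l *m B).

Lemma size_le1M (x y : R) : (size x <= 1)%N -> (size y <= 1)%N -> (size (x * y)%R <= 1)%N.
Proof.
move=> hx hy; apply: leq_trans (size_polyMleq x y) _.
move: hx hy; case: (size x) => [|[|?]] //; case: (size y) => [|[|?]] //.
Qed.

Lemma size_le1D (x y : R) : (size x <= 1)%N -> (size y <= 1)%N -> (size (x + y)%R <= 1)%N.
Proof. by move=> hx hy; apply: leq_trans (size_polyD x y) _; rewrite geq_max hx hy. Qed.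

Lemma cstmx_E (t : R) (B : 'M[R]_2) : (size t <= 1)%N -> cstmx B -> cstmx (Emx t *m B).
Proof.
move=> ht hB i j; rewrite mulE /Emx !mxE.
case: (ord2P i) => -> /=; apply: size_le1D; apply: size_le1M => //;
  by rewrite ?size_poly0 ?size_poly1 ?size_polyN ?size_poly1.
Qed.

Lemma pt_EE t s (Y : 'M[R]_2) :
  pt (Emx t *m (Emx s *m Y)) = cyc (t * (s * Y i0 i0 + Y i1 i0) - Y i0 i0) (t * (s * Y i0 i1 + Y i1 i1) - Y i0 i1).
Proof. by rewrite [Y in LHS]mx2_eta !Emul pt_mx2. Qed.

Lemma NF_step T T' m : NF T m -> distant T T' -> NF T' m.+1.
Proof.
move=> [l [B [hl [hm [cB [iB ->]]]]]] hd.
have iM : mx_invertible (chainL l *m B) by apply: inv_mul => //; apply: chainL_inv.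
move: hd; rewrite /pt => hd.
have [t ->] := step (eq_ind _ _ iM _ (mx2_eta _)) hd.
rewrite -pt_E.
case: (ltnP 1 (size t)) => ht.
  exists (t :: l), B; split; first by apply/andP; split.
  split => //; split => //; split => //.
  by rewrite mulmxA.
clear iM hd; case: l hl hm => [|s l0] hl hm.
  exists [::], (Emx t *m B); split => //; split => //; split; first exact: cstmx_E.
  split; first by apply: inv_mul => //; apply: Emx_inv.
  by rewrite /= !mul1mx.
move: hl; rewrite /big /= => /andP [hs hl0].
rewrite /= -mulmxA pt_EE.
case: (eqVneq t 0) => [t0|tn0].
  exists l0, B; split => //; split; first by move: hm => /= hm; lia.
  split => //; split => //; rewrite t0 !mul0r !add0r /pt.
  have hw : (-1 : R) * (-1) = 1 by rewrite mulrNN mulr1.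
  by rewrite -(cyc_scale _ _ hw) !mulN1r !opprK.
have ct : cst t by apply/eqP; rewrite eqn_leq ht size_poly_gt0.
have [w [tw [wt _]]] := cst_inv ct.
have cw : cst w by have [] := one_sided_cst wt.
exists (s - w :: l0), B; split.
  have hsw : size (s - w) = size s.
    by rewrite size_polyDl // size_polyN; move: hs; rewrite /cst in cw; rewrite cw.
  by rewrite /big /= hl0 andbT hsw.
split; first by move: hm => /= hm; lia.
split => //; split => //; rewrite -mulmxA pt_E -[in RHS](cyc_scale _ _ wt).
move: (chainL l0 *m B) => Y; congr (cyc _ _); by rewrite !mulrDr !mulrBl !mulrBr !mulrA tw !mul1r addrAC.
Qed.

Lemma path_NF m T : path_len m (pt 1%:M) T -> NF T m.
Proof.
move=> [s [s0 [sm hs]]]; rewrite -sm.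
suff : forall i, (i <= m)%N -> NF (s i) i by apply.
elim => [|i IH] hi.
  rewrite s0; exists [::], 1%:M; do 3 split => //.
    by move=> i j; rewrite mxE; case: (i == j); rewrite /= ?mulr1n ?mulr0n ?size_poly1 ?size_poly0.
  by split; [exact: one_inv | rewrite mul1mx].
apply: NF_step (IH (ltnW hi)) (hs _ hi).
Qed.

Lemma bigX n : big (nseq n 'X).
Proof. by elim: n => //= n ->; rewrite size_polyX. Qed.

Lemma NF_far n m : NF (pt (chainL (nseq n 'X))) m -> (n <= m)%N.
Proof.
move=> [l [B [hl [hm [cB [iB e]]]]]].
move: e; rewrite /pt mulE mulE => e.
set p := chainL l i0 i0 in e; set q := chainL l i0 i1 in e.
set p0 := chainL (nseq n 'X) i0 i0 in e; set q0 := chainL (nseq n 'X) i0 i1 in e.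
have [r [e1 e2]] := cyc_eq e.
have [r' [e3 e4]] := cyc_eq (esym e).
have g0 : (size q0 < size p0)%N := growth (bigX n).
have g : (size q < size p)%N := growth hl.
have p0n : p0 != 0 by rewrite -size_poly_gt0; apply: leq_ltn_trans g0.
have rr : r' * r = 1.
  have : (r' * r - 1) * p0 = 0 by rewrite mulrBl mul1r -mulrA -e1 -e3 subrr.
  move/mulP_eq0 => [/eqP|/eqP]; last by rewrite (negbTE p0n).
  by rewrite subr_eq0 => /eqP.
have [cr' cr] := one_sided_cst rr.
have B01 : B i0 i1 = 0.
  apply/eqP/negP => hb.
  have cb : cst (B i0 i1) by apply/eqP; rewrite eqn_leq cB size_poly_gt0; apply/negP.
  have hs3 : (size (q * B i1 i1)%R < size p)%N.
    apply: leq_ltn_trans (size_polyMleq _ _) _.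
    move: (cB i1 i1) g; move: (size (B i1 i1)) (size q) (size p) => x y z; lia.
  have s1 : size (p * B i0 i1 + q * B i1 i1) = size p by rewrite size_polyDl; rewrite (szMc _ cb).
  have s2 : (size (p * B i0 i0 + q * B i1 i0)%R <= size p)%N.
    apply: leq_trans (size_polyD _ _) _; rewrite geq_max; apply/andP; split.
      apply: leq_trans (size_polyMleq _ _) _; move: (cB i0 i0).
      move: (size (B i0 i0)) (size p) => x z; lia.
    apply: leq_trans (size_polyMleq _ _) _.
    move: (cB i1 i0) g; move: (size (B i1 i0)) (size q) (size p) => x y z; lia.
  move: g0; rewrite -(szcM q0 cr) -(szcM p0 cr) -e1 -e2 s1.
  move: s2; move: (size (p * B i0 i0 + q * B i1 i0)) (size p) => x y; lia.
have [e' [f [g' [h [[h1 _ _ _] [_ _ _ h8]]]]]] := iffLR (inv_mx2 _ _ _ _) (eq_ind _ _ iB _ (mx2_eta B)).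
move: h1 h8; rewrite B01 mul0r mulr0 !add0r addr0 => h1 h8.
have [c00 _] := one_sided_cst h1.
have [_ c11] := one_sided_cst h8.
have := U hl (bigX n) cr c00 c11 (esym e1) _.
move: e2; rewrite B01 mulr0 add0r size_nseq => e2 H; rewrite -(H (esym e2)) //.
Qed.

Lemma diam : proj_line_infinite_diameter R.
Proof.
move=> n; exists (pt 1%:M), (pt (chainL (nseq n.+1 'X))).
split; first exact: pt_point one_inv.
split; first exact: pt_point (chainL_inv _).
move=> m hm /path_NF /NF_far; lia.
Qed.

End Main.

Unset Implicit Arguments.
Set Strict Implicit.

Theorem mainTheorem12 (K : unitRingType)
  (hK : forall x : K, x != 0 -> x \is a GRing.unit) :
  proj_line_connected {poly K} /\ proj_line_infinite_diameter {poly K}.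
Proof. split; [exact: connected hK | exact: diam hK]. Qed.
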